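(* In the meta-algorithm described in the context (with an arbitrary commitment subroutine), every honest search step $q$ whose current node $I^q$ is not a leaf satisfies $\Phi_{q+1}=\Phi_q-1$.
   Context: Robust dynamic pricing: there are $T$ rounds and an unknown valuation $v^\star\in[0,1)$. At each round $t$ the seller posts $p_t\in[0,1]$; the true sale indicator is $y_t=\mathbbm 1\{p_t\le v^\star\}$, the seller observes $\sigma_t\in\{0,1\}$, and round $t$ is corrupted if $\sigma_t\neq y_t$. Meta-algorithm: let $D=\lceil\log_2 T\rceil$. Consider the complete binary tree of intervals of depth $D$ with root $[0,1)$, where each non-leaf node $[L,R)$ has children $[L,M)$ and $[M,R)$, $M=(L+R)/2$; the depth-$D$ nodes are the leaves, and $\ell^\star$ is the unique leaf containing $v^\star$. The algorithm keeps a current node $I$, initially the root. If $I=[L,R)$ is not a leaf, it performs a safety check — post $L$ and observe $\sigma_L$, post $R$ and observe $\sigma_R$; the check fails if $\sigma_L=0$ or $\sigma_R=1$ (by convention the query at $L=0$ and the query at $R=1$ always count as passing). On failure $I$ becomes its parent; otherwise it posts $M$, observes $\sigma_M$, and $I$ becomes $[M,R)$ if $\sigma_M=1$ and $[L,M)$ if $\sigma_M=0$. If $I$ is a leaf, a commitment subroutine is run on $I$; it posts prices on consecutive rounds and may return FAIL, in which case $I$ becomes its parent. Search steps: each iteration at a non-leaf node (safety check plus possible midpoint query) is one search step; each call of the commitment subroutine at a leaf is one search step. A search step is honest if none of its rounds is corrupted, and corrupted otherwise. $I^q$ is the current node at the start of search step $q$, and $\Phi_q=\mathrm{dist}(I^q,\ell^\star)$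 is the length of the shortest path between $I^q$ and $\ell^\star$ in the tree. *)

(* Defs.v *)
From HB Require Import structures.
From mathcomp Require Import all_boot all_order all_algebra.
Set Implicit Arguments. Unset Strict Implicit. Unset Printing Implicit Defensive.
Import Order.TTheory GRing.Theory Num.Theory.

(* A node of the complete binary tree of intervals is encoded as (d, k):
   depth d, index k, standing for the dyadic interval [k/2^d, (k+1)/2^d).
   The root is (0,0); the children of (d,k) are (d+1,2k) = [L,M) and
   (d+1,2k+1) = [M,R). *)
Definition node := (nat * nat)%type.

Definition depth (T : nat) : nat := up_log 2 T.

Definition valid (D : nat) (a : node) : bool := (a.1 <= D) && (a.2 < 2 ^ a.1).

Definition is_leaf (D : nat) (a : node) : bool := a.1 == D.

Definition is_child (a b : node) : bool :=
  (b.1 == a.1.+1) && ((b.2 == a.2.*2) || (b.2 == a.2.*2.+1)).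

Definition adj (a b : node) : bool := is_child a b || is_child b a.

Inductive walk (D : nat) : node -> node -> nat -> Prop :=
| walk0 a : valid D a -> walk D a a 0
| walkS a b c n : valid D a -> adj a b -> walk D b c n -> walk D a c n.+1.

Definition is_dist (D : nat) (a b : node) (n : nat) : Prop :=
  walk D a b n /\ (forall m, walk D a b m -> n <= m).

Local Open Scope ring_scope.

Definition lo (R : realFieldType) (a : node) : R := a.2%:R / (2 ^+ a.1).
Definition hi (R : realFieldType) (a : node) : R := (a.2.+1)%:R / (2 ^+ a.1).
Definition mid (R : realFieldType) (a : node) : R := (lo R a + hi R a) / 2.

Definition contains (R : realFieldType) (a : node) (v : R) : bool :=
  (lo R a <= v) && (v < hi R a).

Definition parent (a : node) : node := (a.1.-1, a.2./2).
Definition left_child (a : node) : node := (a.1.+1, a.2.*2).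
Definition right_child (a : node) : node := (a.1.+1, a.2.*2.+1).

(* the safety check fails on observations sL (at L) and sR (at R);
   the query at L = 0 and the query at R = 1 always count as passing *)
Definition check_fails (R : realFieldType) (a : node) (sL sR : bool) : bool :=
  ((lo R a != 0) && ~~ sL) || ((hi R a != 1) && sR).

Definition search_step (R : realFieldType) (a : node) (sL sR sM : bool) : node :=
  if check_fails R a sL sR then parent a
  else if sM then right_child a else left_child a.

(* Main.v *)
Require Import Defs.
From HB Require Import structures.
From mathcomp Require Import all_boot all_order all_algebra zify ring lra.
Import Order.TTheory GRing.Theory Num.Theory.
Set Implicit Arguments. Unset Strict Implicit. Unset Printing Implicit Defensive.
Local Open Scope ring_scope.
Lemma key (R : realFieldType) (v : R) D L N : L%:R / 2^+D <= v -> v < L.+1%:R / 2^+D ->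
  (N%:R / 2^+D <= v) = (N <= L)%N.
Proof.
move=> h1 h2; have hp : 0 < (2 ^+ D : R)^-1 by rewrite invr_gt0 exprn_gt0.
apply/idP/idP => h.
- rewrite leqNgt; apply/negP => hlt.
  have : L.+1%:R / 2^+D <= N%:R / 2^+D :> R by rewrite ler_pM2r // ler_nat.
  by move=> h3; have := lt_le_trans h2 (le_trans h3 h); rewrite ltxx.
- by apply: le_trans h1; rewrite ler_pM2r // ler_nat.
Qed.
Lemma scale (R : realFieldType) D d m : (d <= D)%N ->
  m%:R / 2^+d = (m * 2 ^ (D - d))%:R / 2^+D :> R.
Proof.
move=> h; rewrite natrM natrX -{2}(subnKC h) exprD.
have h1 : (2 ^+ d : R) != 0 by rewrite gt_eqF // exprn_gt0.
have h2 : (2 ^+ (D - d) : R) != 0 by rewrite gt_eqF // exprn_gt0.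
by field; rewrite h1 h2.
Qed.
Local Close Scope ring_scope.

Fixpoint dlf (D L d k : nat) : nat :=
  if k == L %/ 2 ^ (D - d) then D - d
  else match d with 0 => 0 | d'.+1 => (dlf D L d' k./2).+1 end.

Lemma dlfE D L d k : dlf D L d k =
  if k == L %/ 2 ^ (D - d) then D - d
  else match d with 0 => 0 | d'.+1 => (dlf D L d' k./2).+1 end.
Proof. by case: d. Qed.

Definition dl D L (a : node) := dlf D L a.1 a.2.

Lemma divE D d L : d < D -> L %/ 2 ^ (D - d.+1) %/ 2 = L %/ 2 ^ (D - d).
Proof. move=> h; rewrite -divnMA -expnSr; congr (_ %/ 2 ^ _); lia. Qed.

Lemma walk_valid D a c n : walk D a c n -> valid D a.
Proof. by case. Qed.

Lemma child_edge D L a b : valid D b -> is_child a b ->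
  dl D L b = (dl D L a).+1 \/ dl D L a = (dl D L b).+1.
Proof.
case: a b => [d k] [d' k'] /andP [/= hd hk] /andP [/= /eqP e hk'].
subst d'.
have hk2 : k'./2 = k by case/orP: hk' => /eqP ->; lia.
rewrite /dl /= hk2.
case: eqP => [h|_]; last by left.
right; rewrite dlfE.
have -> : k = L %/ 2 ^ (D - d) by rewrite -hk2 h -divn2 divE.
rewrite eqxx; lia.
Qed.

Lemma adj_edge D L a b : valid D a -> valid D b -> adj a b ->
  dl D L b = (dl D L a).+1 \/ dl D L a = (dl D L b).+1.
Proof.
move=> va vb /orP [h|h]; first exact: child_edge h.
by case: (child_edge L va h) => ->; [right|left].
Qed.

Lemma dl_lower D L l a m : walk D a l m -> l.1 = D -> l.2 = L -> dl D L a <= m.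
Proof.
elim=> {a l m} [a va|a b c n va hab wb IH] h1 h2.
  rewrite /dl dlfE -h2 h1 subnn expn0 divn1 eqxx; lia.
have := adj_edge L va (walk_valid wb) hab; have := IH h1 h2; lia.
Qed.

Lemma dl_upper D L n : L < 2 ^ D -> forall a, valid D a -> dl D L a = n ->
  walk D a (D, L) n.
Proof.
move=> hL; elim: n => [|n IH] [d k] /andP [/= hd hk]; rewrite /dl /= dlfE.
- case: eqP => [e|ne].
    move=> h0; have hdD : d = D by lia.
    subst d; rewrite subnn expn0 divn1 in e; subst k.
    by apply: walk0; rewrite /valid /= leqnn.
  case: d hd hk ne => [|d] hd hk ne; last by [].
  by exfalso; apply: ne; rewrite subn0 divn_small //; rewrite expn0 in hk; lia.
- case: eqP => [e|ne].
  + move=> hn.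
    have hdD : d < D by lia.
    apply: (@walkS _ _ (d.+1, L %/ 2 ^ (D - d.+1))).
    * by rewrite /valid /= hd hk.
    * apply/orP; left; rewrite /is_child /= eqxx /= e -(divE _ hdD) divn2.
      set x := L %/ 2 ^ (D - d.+1).
      have [h|h] : x = x./2.*2 \/ x = x./2.*2.+1 by lia.
        by apply/orP; left; apply/eqnP.
      by apply/orP; right; apply/eqnP.
    * apply: IH.
        rewrite /valid /= hdD /= ltn_divLR ?expn_gt0 // -expnD.
        by have -> : d.+1 + (D - d.+1) = D by lia.
      by rewrite /dl /= dlfE eqxx; lia.
  + case: d hd hk ne => [|d] hd hk ne; first by [].
    case=> hn.
    apply: (@walkS _ _ (d, k./2)).
    * by rewrite /valid /= hd hk.
    * apply/orP; right; rewrite /is_child /= eqxx /=.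
      have [h|h] : k = k./2.*2 \/ k = k./2.*2.+1 by lia.
        by apply/orP; left; apply/eqnP.
      by apply/orP; right; apply/eqnP.
    * apply: IH; last by [].
      rewrite /valid /=; apply/andP; split; first lia.
      by rewrite ltn_half_double -mul2n -expnS.
Qed.

Lemma dl_dist D L a : (L < 2 ^ D)%N -> valid D a -> is_dist D a (D, L) (dl D L a).
Proof.
move=> hL va; split; first exact: dl_upper.
by move=> m w; apply: (dl_lower w).
Qed.

Local Open Scope ring_scope.

Lemma lo_neq0 (R : realFieldType) d k : (k%:R / 2^+d != 0 :> R) = (k != 0)%N.
Proof.
have h : (2 ^+ d : R) != 0 by rewrite gt_eqF // exprn_gt0.
by rewrite mulf_eq0 invr_eq0 (negbTE h) orbF pnatr_eq0.
Qed.

Lemma hi_neq1 (R : realFieldType) d k : (k.+1%:R / 2^+d != 1 :> R) = (k.+1 != 2 ^ d)%N.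
Proof.
have h : (2 ^+ d : R) != 0 by rewrite gt_eqF // exprn_gt0.
congr negb; apply/eqP/eqP => [e|e].
  by apply/eqP; rewrite -(eqr_nat R) natrX; apply/eqP; exact: divr1_eq e.
by rewrite e natrX divff // -natrX.
Qed.

Lemma midE (R : realFieldType) d k : mid R (d, k) = (k.*2.+1)%:R / 2^+(d.+1).
Proof.
have h : (2 ^+ d : R) != 0 by rewrite gt_eqF // exprn_gt0.
have h2 : (2 : R) != 0 by rewrite pnatr_eq0.
rewrite /mid /lo /hi /= -muln2 !mulrSr natrM exprS.
field; rewrite add0r; exact: h.
Qed.

Lemma cf_nat d k D L : (d <= D)%N -> (L < 2 ^ D)%N ->
  ((k != 0)%N && ~~ (k * 2 ^ (D - d) <= L)%N || (k.+1 != 2 ^ d)%N && (k.+1 * 2 ^ (D - d) <= L)%N)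
  = ~~ (k == L %/ 2 ^ (D - d))%N.
Proof.
move=> hd hL; have hs : (0 < 2 ^ (D - d))%N by rewrite expn_gt0.
rewrite [(k == L %/ _)%N]eqn_leq (leq_divRL _ _ hs).
have -> : (L %/ 2 ^ (D - d) <= k)%N = (L < k.+1 * 2 ^ (D - d))%N by rewrite -ltnS ltn_divLR.
case: (leqP (k * 2 ^ (D - d)) L) => h1; case: (leqP (k.+1 * 2 ^ (D - d)) L) => h2 //=; rewrite ?andbT ?andbF ?orbF ?orbT /=.
1: apply/negP => /eqP e; move: h2; rewrite e -expnD.
1: have -> : (d + (D - d) = D)%N by lia.
1: by rewrite leqNgt hL.
all: by case: (posnP k) h1 => [->|kp]; rewrite ?mul0n.
Qed.

Theorem lemma3p1 (R : realFieldType) (T : nat) (vstar : R)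
  (hv0 : 0 <= vstar) (hv1 : vstar < 1)
  (lstar : node) (Hl : valid (depth T) lstar) (Hleaf : is_leaf (depth T) lstar)
  (Hcont : contains lstar vstar)
  (I : node) (HI : valid (depth T) I) (HnI : ~~ is_leaf (depth T) I)
  (sL sR sM : bool)
  (honL : sL = (lo R I <= vstar))
  (honR : sR = (hi R I <= vstar))
  (honM : ~~ check_fails R I sL sR -> sM = (mid R I <= vstar)) :
  exists n : nat,
    is_dist (depth T) I lstar n.+1 /\
    is_dist (depth T) (search_step R I sL sR sM) lstar n.
Proof.
move: (depth T) Hl Hleaf HI HnI => D Hl Hleaf HI HnI.
case: lstar Hl Hleaf Hcont => D' L Hl /eqP /= HD Hcont; subst D'.
move: Hl => /andP [_ /= hL].
move: Hcont => /andP []; rewrite /lo /hi /= => c1 c2.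
case: I HI HnI honL honR honM => d k /andP [/= hd hk] /= HnI honL honR honM.
have hdD : (d < D)%N by rewrite ltn_neqAle hd andbT; exact: HnI.
have hs : (0 < 2 ^ (D - d))%N by rewrite expn_gt0.
have hs' : (0 < 2 ^ (D - d.+1))%N by rewrite expn_gt0.
rewrite /lo /= (scale _ _ hd) (key _ c1 c2) in honL.
rewrite /hi /= (scale _ _ hd) (key _ c1 c2) in honR.
rewrite midE (scale _ _ hdD) (key _ c1 c2) -(leq_divRL _ _ hs') in honM.
have hcf : check_fails R (d,k) sL sR = ~~ (k == L %/ 2 ^ (D - d))%N.
  rewrite /check_fails /lo /hi /= lo_neq0 hi_neq1 honL honR.
  exact: cf_nat.
have hx : (L %/ 2 ^ (D - d) = (L %/ 2 ^ (D - d.+1))./2)%N by rewrite -divn2 divE.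
set x := (L %/ 2 ^ (D - d.+1))%N in hx honM.
case: (boolP (k == L %/ 2 ^ (D - d))%N) => hanc.
- have := honM; rewrite hcf hanc => /(_ isT) hM.
  have hdl : dl D L (d, k) = (D - d.+1).+1 by rewrite /dl /= dlfE hanc; lia.
  exists (D - d.+1)%N; split; first by rewrite -hdl; apply: dl_dist hL _; rewrite /valid /= hd hk.
  rewrite /search_step hcf hanc /= /right_child /left_child /= hM.
  case: ifP => hM'.
  + have e : (k.*2.+1 == x)%N by move: hanc; rewrite hx => /eqP e; apply/eqP; lia.
    have -> : (D - d.+1 = dl D L (d.+1, k.*2.+1))%N by rewrite /dl /= e.
    apply: dl_dist => //; rewrite /valid /= hdD expnS; lia.
  + have e : (k.*2 == x)%N by move: hanc hM'; rewrite hx => /eqP e hM'; apply/eqP; lia.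
    have -> : (D - d.+1 = dl D L (d.+1, k.*2))%N by rewrite /dl /= e.
    apply: dl_dist => //; rewrite /valid /= hdD expnS; lia.
- have hd0 : d != 0%N.
    apply/eqP => ed; subst d.
    have k0 : k = 0%N by rewrite expn0 in hk; lia.
    by move: hanc; rewrite k0 subn0 divn_small.
  have ed : d = d.-1.+1 by lia.
  rewrite ed.
  exists (dl D L (d.-1, k./2)); split.
    have <- : dl D L (d.-1.+1, k) = (dl D L (d.-1, k./2)).+1 by rewrite /dl /= -ed (negbTE hanc).
    by apply: dl_dist hL _; rewrite -ed /valid /= hd hk.
  rewrite -ed /search_step hcf hanc /= /parent /=.
  apply: dl_dist => //; rewrite /valid /=; apply/andP; split; first lia.
  by rewrite ltn_half_double -mul2n -expnS -ed.
Qed.
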